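(* Let $\kappa$ be an infinite cardinal. The set $S=T\cap M_3[\mathcal{F}(\kappa)]$ is a bounded sublattice of the lattice $M_3[\mathcal{F}(\kappa)]$.
   Context: $\mathcal{F}(\kappa)$ is the Boolean lattice of subsets $X\subseteq\kappa$ that are finite or cofinite. For sets $A,B,C$, $\mu(A,B,C)=(A\cap B)\cup(A\cap C)\cup(B\cap C)$. $T=\{(A,B,C)\in\mathcal{F}(\kappa)^3 : C\setminus\mu(A,B,C)\text{ is finite}\}$. A triple is balanced if $A\cap B=A\cap C=B\cap C$; $M_3[\mathcal{F}(\kappa)]$ is the set of balanced triples in $\mathcal{F}(\kappa)^3$, a lattice under the componentwise order with componentwise intersection as meet and join $(A,B,C)\vee(A',B',C')=(U_1\cup m,U_2\cup m,U_3\cup m)$ where $U_1=A\cup A'$, $U_2=B\cup B'$, $U_3=C\cup C'$, $m=\mu(U_1,U_2,U_3)$; its bounds are $(\emptyset,\emptyset,\emptyset)$ and $(\kappa,\kappa,\kappa)$. *)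

(* Defs.v *)
(* MathComp-Analysis classical sets world. The cardinal kappa is modelled
   as an arbitrary infinite type K (the underlying set of kappa). *)
From mathcomp Require Import all_boot.
From mathcomp Require Import boolp classical_sets cardinality.
Set Implicit Arguments. Unset Strict Implicit. Unset Printing Implicit Defensive.
Local Open Scope classical_set_scope.

Definition finCofin (K : Type) (X : set K) : Prop :=
  finite_set X \/ finite_set (~` X).

Definition mu (K : Type) (A B C : set K) : set K :=
  (A `&` B) `|` (A `&` C) `|` (B `&` C).

Definition triple (K : Type) := (set K * set K * set K)%type.

Definition t1 (K : Type) (t : triple K) : set K := t.1.1.
Definition t2 (K : Type) (t : triple K) : set K := t.1.2.
Definition t3 (K : Type) (t : triple K) : set K := t.2.

Definition inF3 (K : Type) (t : triple K) : Prop :=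
  finCofin (t1 t) /\ finCofin (t2 t) /\ finCofin (t3 t).

Definition inT (K : Type) (t : triple K) : Prop :=
  inF3 t /\ finite_set (t3 t `\` mu (t1 t) (t2 t) (t3 t)).

Definition balanced (K : Type) (t : triple K) : Prop :=
  t1 t `&` t2 t = t1 t `&` t3 t /\ t1 t `&` t3 t = t2 t `&` t3 t.

Definition inM3 (K : Type) (t : triple K) : Prop := inF3 t /\ balanced t.

Definition M3meet (K : Type) (t t' : triple K) : triple K :=
  (t1 t `&` t1 t', t2 t `&` t2 t', t3 t `&` t3 t').

Definition M3join (K : Type) (t t' : triple K) : triple K :=
  let U1 := t1 t `|` t1 t' in
  let U2 := t2 t `|` t2 t' in
  let U3 := t3 t `|` t3 t' in
  let m := mu U1 U2 U3 in
  (U1 `|` m, U2 `|` m, U3 `|` m).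

Definition M3bot (K : Type) : triple K := (set0, set0, set0).
Definition M3top (K : Type) : triple K := (setT, setT, setT).

Definition inS (K : Type) (t : triple K) : Prop := inT t /\ inM3 t.

Definition bounded_sublattice_M3 (K : Type) (P : triple K -> Prop) : Prop :=
  (forall t, P t -> inM3 t) /\
  P (M3bot K) /\ P (M3top K) /\
  (forall t t', P t -> P t' -> P (M3meet t t') /\ P (M3join t t')).

(* Main.v *)
Require Import Defs.
From mathcomp Require Import all_boot.
From mathcomp Require Import boolp classical_sets cardinality.
Local Open Scope classical_set_scope.

Ltac unf := cbv [setD setU setI setC mkset set0 setT mu t1 t2 t3 M3join M3meet M3bot M3top] in *.

Definition muP (a b c : Prop) := (a/\b \/ a/\c) \/ b/\c.

Lemma meetT_pt (a b c a' b' c' : Prop) :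
  (a/\b <-> a/\c) -> (a/\c <-> b/\c) -> (a'/\b' <-> a'/\c') -> (a'/\c' <-> b'/\c') ->
  (c/\c') /\ ~ muP (a/\a') (b/\b') (c/\c') ->
  c /\ ~ muP a b c \/ c' /\ ~ muP a' b' c'.
Proof.
rewrite /muP => e1 e2 e1' e2' [[hc hc'] hn].
have k1 : muP a b c -> a/\b/\c by rewrite /muP; tauto.
have k2 : muP a' b' c' -> a'/\b'/\c' by rewrite /muP; tauto.
rewrite /muP in k1 k2.
have [h|h] := pselect ((a/\b \/ a/\c) \/ b/\c); [right|left]; last by tauto.
split => // h'; apply: hn; move: (k1 h) (k2 h'); tauto.
Qed.

Lemma meetB_pt (a b c a' b' c' : Prop) :
  (a/\b <-> a/\c) -> (a/\c <-> b/\c) -> (a'/\b' <-> a'/\c') -> (a'/\c' <-> b'/\c') ->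
  ((a/\a')/\(b/\b') <-> (a/\a')/\(c/\c')) /\ ((a/\a')/\(c/\c') <-> (b/\b')/\(c/\c')).
Proof. move=> e1 e2 e1' e2'; split; split; move=> [[? ?] [? ?]]; tauto. Qed.

Lemma joinT_pt (a b c a' b' c' : Prop) :
  let m := muP (a \/ a') (b \/ b') (c \/ c') in
  ((c \/ c') \/ m) /\ ~ muP ((a \/ a') \/ m) ((b \/ b') \/ m) ((c \/ c') \/ m) ->
  c /\ ~ muP a b c \/ c' /\ ~ muP a' b' c'.
Proof.
move=> m [hc hn].
have hm : ~ m by move=> h; apply: hn; rewrite /muP; tauto.
have h1 : ~ muP a b c by move=> h; apply: hm; move: h; rewrite /m /muP; tauto.
have h2 : ~ muP a' b' c' by move=> h; apply: hm; move: h; rewrite /m /muP; tauto.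
have [h|h] := pselect c; [left|right]; first by [].
split => //; tauto.
Qed.

Lemma joinB_pt (u1 u2 u3 : Prop) :
  let m := muP u1 u2 u3 in
  ((u1 \/ m) /\ (u2 \/ m) <-> (u1 \/ m) /\ (u3 \/ m)) /\
  ((u1 \/ m) /\ (u3 \/ m) <-> (u2 \/ m) /\ (u3 \/ m)).
Proof.
move=> m.
have p12 : (u1 \/ m) /\ (u2 \/ m) <-> m by rewrite /m /muP; tauto.
have p13 : (u1 \/ m) /\ (u3 \/ m) <-> m by rewrite /m /muP; tauto.
have p23 : (u2 \/ m) /\ (u3 \/ m) <-> m by rewrite /m /muP; tauto.
rewrite p12 p13 p23; tauto.
Qed.

Lemma ptw {K : Type} {A B : set K} x : A = B -> (A x <-> B x).
Proof. by move=> ->. Qed.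

Lemma fcU (K : Type) (X Y : set K) : finCofin X -> finCofin Y -> finCofin (X `|` Y).
Proof.
move=> [hX|hX] [hY|hY].
- by left; rewrite finite_setU.
- by right; apply: sub_finite_set hY => x; unf; tauto.
- by right; apply: sub_finite_set hX => x; unf; tauto.
- by right; apply: sub_finite_set hX => x; unf; tauto.
Qed.

Lemma fcI (K : Type) (X Y : set K) : finCofin X -> finCofin Y -> finCofin (X `&` Y).
Proof.
move=> [hX|hX] [hY|hY].
- by left; apply: sub_finite_set hX => x; unf; tauto.
- by left; apply: sub_finite_set hX => x; unf; tauto.
- by left; apply: sub_finite_set hY => x; unf; tauto.
- right; apply: (@sub_finite_set _ _ (~` X `|` ~` Y)); last by rewrite finite_setU.
  move=> x; unf => H; have [hx|hx] := pselect (X x); have [hy|hy] := pselect (Y x); tauto.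
Qed.

Theorem lemma3p3 (K : Type) (hK : infinite_set [set: K]) :
  bounded_sublattice_M3 (@inS K).
Proof.
split; first by move=> t [].
split.
  have f0 : finCofin (@set0 K) by left; exact: finite_set0.
  split; [split; [by do !split|]|split; [by do !split|]].
  - by apply: sub_finite_set (finite_set0 K) => x; unf; tauto.
  - by split.
split.
  have fT : finCofin (@setT K).
    by right; apply: sub_finite_set (finite_set0 K) => x; unf; tauto.
  split; [split; [by do !split|]|split; [by do !split|]].
  - by apply: sub_finite_set (finite_set0 K) => x; unf; tauto.
  - by split.
case=> [[A B] C] [[A' B'] C'].
move=> [[[fA [fB fC]] hT] [_ [e1 e2]]] [[[fA' [fB' fC']] hT'] [_ [e1' e2']]].
rewrite /t1 /t2 /t3 /= in fA fB fC fA' fB' fC' hT hT' e1 e2 e1' e2'.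
split.
- have F : inF3 (M3meet (A, B, C) (A', B', C')).
    by rewrite /inF3 /M3meet /t1 /t2 /t3 /=; do !split; apply: fcI.
  split; split => //.
  + have hU : finite_set ((C `\` mu A B C) `|` (C' `\` mu A' B' C')) by rewrite finite_setU.
    apply: (sub_finite_set _ hU).
    move=> x hx; exact (meetT_pt (A x) (B x) (C x) (A' x) (B' x) (C' x) (ptw x e1) (ptw x e2) (ptw x e1') (ptw x e2') hx).
  + rewrite /balanced /M3meet /t1 /t2 /t3 /=; split; apply: funext => x; apply: propext;
    [exact: (proj1 (meetB_pt (A x) (B x) (C x) (A' x) (B' x) (C' x) (ptw x e1) (ptw x e2) (ptw x e1') (ptw x e2')))
    |exact: (proj2 (meetB_pt (A x) (B x) (C x) (A' x) (B' x) (C' x) (ptw x e1) (ptw x e2) (ptw x e1') (ptw x e2')))].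
- have F : inF3 (M3join (A, B, C) (A', B', C')).
    by rewrite /inF3 /M3join /t1 /t2 /t3 /mu /=; do !split;
      repeat (apply: fcU || apply: fcI).
  split; split => //.
  + have hU : finite_set ((C `\` mu A B C) `|` (C' `\` mu A' B' C')) by rewrite finite_setU.
    apply: (sub_finite_set _ hU).
    move=> x hx; exact (joinT_pt (A x) (B x) (C x) (A' x) (B' x) (C' x) hx).
  + rewrite /balanced /M3join /t1 /t2 /t3 /=; split; apply: funext => x; apply: propext;
    [exact: (proj1 (joinB_pt (A x \/ A' x) (B x \/ B' x) (C x \/ C' x)))
    |exact: (proj2 (joinB_pt (A x \/ A' x) (B x \/ B' x) (C x \/ C' x)))].
Qed.
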